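(* Let $\mathbb{F}\in\{\mathbb{R},\mathbb{C}\}$, let $n\geq 1$, $k\geq 1$, and equip $M_n(\mathbb{F})$ with a norm $\|\cdot\|$. Let $f_1,\dots,f_k\colon GL_n(\mathbb{F})\to GL_n(\mathbb{F})$ be mappings, at least one of which is open (with respect to the topology of $GL_n(\mathbb{F})$ as a subspace of $M_n(\mathbb{F})$). Let $A_1,\dots,A_k\in M_n(\mathbb{F})$. Then for every $\varepsilon>0$ there exist invertible matrices $A_{1\varepsilon},\dots,A_{k\varepsilon}\in GL_n(\mathbb{F})$, each with a simple spectrum, such that $\|A_i-A_{i\varepsilon}\|<\varepsilon$ for all $i=1,\dots,k$, and the product $f_1(A_{1\varepsilon})f_2(A_{2\varepsilon})\cdots f_k(A_{k\varepsilon})$ has a simple spectrum.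
   Context: $M_n(\mathbb{F})$ is the space of $n\times n$ matrices over $\mathbb{F}$ and $GL_n(\mathbb{F})$ the group of invertible ones. A matrix has a simple spectrum if all its eigenvalues (the roots in $\mathbb{C}$ of its characteristic polynomial) have algebraic multiplicity one, i.e. are pairwise distinct. A mapping is open if it sends open sets to open sets. The mappings $f_i$ are not assumed to be continuous or homomorphisms. *)

(* Defs.v *)
From mathcomp Require Import all_boot all_algebra.
From mathcomp Require Import reals.
From mathcomp Require Import complex.
Import GRing.Theory Num.Theory.
Set Implicit Arguments. Unset Strict Implicit. Unset Printing Implicit Defensive.
Local Open Scope ring_scope.

(* The scalar field F is either R or C = R[i] (R a model of the reals).
   [toC] is the embedding of F into C (used to take eigenvalues in C),
   [absF] the absolute value of F (used for norm homogeneity). *)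
Inductive RorC (R : realType) : forall F : numFieldType, (F -> R[i]) -> (F -> R) -> Prop :=
 | RorC_R : @RorC R (R : numFieldType) (real_complex R) Num.norm
 | RorC_C : @RorC R (R[i] : numFieldType) id (@ComplexField.Normc.normc R).

Definition mx_norm (R : realType) (F : numFieldType) (absF : F -> R) (n : nat)
  (N : 'M[F]_n -> R) : Prop :=
  [/\ forall A, 0 <= N A,
      forall A, N A = 0 -> A = 0,
      forall (a : F) A, N (a *: A) = absF a * N A
    & forall A B, N (A + B) <= N A + N B].

Definition GL_open (R : realType) (F : numFieldType) (n : nat)
  (N : 'M[F]_n -> R) (U : 'M[F]_n -> Prop) : Prop :=
  (forall A, U A -> A \in unitmx) /\
  (forall A, U A -> exists r : R, 0 < r /\
      forall B, B \in unitmx -> N (B - A) < r -> U B).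

(* f (a total function on matrices) restricts to a map GL_n(F) -> GL_n(F);
   its values outside GL_n(F) play no role. *)
Definition GL_map (F : numFieldType) (n : nat) (f : 'M[F]_n -> 'M[F]_n) : Prop :=
  forall A, A \in unitmx -> f A \in unitmx.

Definition open_GL_map (R : realType) (F : numFieldType) (n : nat)
  (N : 'M[F]_n -> R) (f : 'M[F]_n -> 'M[F]_n) : Prop :=
  forall U, GL_open N U -> GL_open N (fun B => exists A, U A /\ f A = B).

(* simple spectrum: every complex root of the characteristic polynomial
   has algebraic multiplicity (at most, hence exactly) one. *)
Definition simple_spectrum (R : realType) (F : numFieldType) (toC : F -> R[i])
  (n : nat) (A : 'M[F]_n) : Prop :=
  forall z : R[i], (mup z (map_poly toC (char_poly A)) <= 1)%N.

(* Main.v *)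
Require Import Defs.
From mathcomp Require Import all_boot all_algebra.
From mathcomp Require Import reals.
From mathcomp Require Import complex.
From mathcomp Require Import mpoly.
From mathcomp Require Import boolp classical_sets.
From mathcomp Require Import all_field.
From mathcomp Require Import ring lra.
Import GRing.Theory Num.Theory order.Order.TTheory.
Local Open Scope ring_scope.
Set Implicit Arguments. Unset Strict Implicit. Unset Printing Implicit Defensive.
Lemma map_resultant_gen (aR rR : nzRingType) (f : {rmorphism aR -> rR}) (p q : {poly aR}) :
    f (lead_coef p) != 0 -> f (lead_coef q) != 0 ->
  f (resultant p q)= resultant (map_poly f p) (map_poly f q).
Proof.
move=> nz_fp nz_fq; rewrite /resultant /Sylvester_mx !size_map_poly_id0 //.
rewrite -det_map_mx /= map_col_mx; congr (\det (col_mx _ _));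
  by apply: map_lin1_mx => v; rewrite map_poly_rV rmorphM /= map_rVpoly.
Qed.

Lemma lead_coef_deriv_monic (R : nzRingType) (p : {poly R}) d :
  p \is monic -> size p = d.+2 -> (d.+1)%:R != 0 :> R ->
  lead_coef p^`() = (d.+1)%:R.
Proof.
move=> mp sp nz.
have e : p`_d.+1 *+ d.+1 = (d.+1)%:R.
  by have := monicP mp; rewrite lead_coefE sp /= => ->.
have sz : size p^`() = d.+1.
  rewrite /deriv sp /=; apply: size_poly_eq => /=; by rewrite e.
by rewrite lead_coefE sz /= coef_deriv e.
Qed.

Definition Gam (R : comNzRingType) m (X : 'M[R]_m.+1) : R :=
  \det X * resultant (char_poly X) (char_poly X)^`().

Lemma map_Gam (aR rR : comNzRingType) (f : {rmorphism aR -> rR}) m (X : 'M[aR]_m.+1) :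
  (m.+1)%:R != 0 :> rR -> f (Gam X) = Gam (map_mx f X).
Proof.
move=> nz.
have nza : (m.+1)%:R != 0 :> aR by apply: contra nz => /eqP h; rewrite -(rmorph_nat f) h rmorph0.
have mon := char_poly_monic X.
have sz : size (char_poly X) = m.+2 by rewrite size_char_poly.
rewrite /Gam rmorphM det_map_mx; congr (_ * _).
rewrite map_resultant_gen.
- by rewrite -deriv_map map_char_poly.
- by rewrite (monicP mon) rmorph1 oner_eq0.
- by rewrite (lead_coef_deriv_monic mon sz nza) rmorph_nat.
Qed.

Lemma Gam_neq0 (F : fieldType) m (X : 'M[F]_m.+1) :
  Gam X != 0 -> X \in unitmx /\ separable_poly (char_poly X).
Proof.
rewrite /Gam mulf_eq0 negb_or => /andP[d0 r0]; split.
  by rewrite unitmxE unitfE.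
move: r0; rewrite resultant_eq0 -leqNgt => h.
rewrite unlock /coprimep eqn_leq h /= size_poly_gt0.
apply/negP; rewrite gcdp_eq0 => /andP[/eqP p0 _].
by move: (char_poly_monic X); rewrite p0 monicE lead_coef0 eq_sym oner_eq0.
Qed.

Lemma sep_Gam (F : fieldType) m (X : 'M[F]_m.+1) :
  X \in unitmx -> separable_poly (char_poly X) -> Gam X != 0.
Proof.
rewrite unitmxE unitfE => d0 sep; rewrite /Gam mulf_neq0 //.
rewrite resultant_eq0 -leqNgt; move: sep; rewrite unlock /coprimep.
by move/eqP->.
Qed.

Lemma sep_simple (R : realType) (F : fieldType) (toC : {rmorphism F -> R[i]}) m
   (X : 'M[F]_m.+1) : separable_poly (char_poly X) ->
   forall z : R[i], (mup z (map_poly toC (char_poly X)) <= 1)%N.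
Proof.
move=> sep z.
have sep' : separable_poly (map_poly toC (char_poly X)).
  by move: sep; rewrite !unlock deriv_map coprimep_map.
have nz : map_poly toC (char_poly X) != 0.
  by rewrite map_poly_eq0 monic_neq0 ?char_poly_monic.
rewrite -ltnS mup_ltn //.
by rewrite (separable_nosquare sep') // size_XsubC.
Qed.

Definition Dmx (F : numFieldType) m : 'M[F]_m.+1 := diag_mx (\row_(i < m.+1) (i.+1)%:R).

Lemma Gam_Dmx (F : numFieldType) m : Gam (Dmx F m) != 0.
Proof.
apply: sep_Gam.
  rewrite unitmxE unitfE /Dmx det_diag; apply/prodf_neq0 => i _.
  by rewrite mxE pnatr_eq0.
rewrite /Dmx char_poly_trig ?diag_mx_is_trig //.
have -> : \prod_(i < m.+1) ('X - (diag_mx (\row_(i0 < m.+1) (i0.+1)%:R) i i)%:P) =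
  \prod_(x <- [seq (i.+1)%:R | i : 'I_m.+1 <- index_enum 'I_m.+1]) ('X - x%:P) :> {poly F}.
  rewrite big_map; apply: eq_bigr => i _; by rewrite !mxE eqxx.
rewrite separable_prod_XsubC map_inj_uniq ?index_enum_uniq //.
by move=> i j /eqP; rewrite eqr_nat eqSS => /eqP /val_inj.
Qed.
Lemma real_complete (R : realType) (u : nat -> R) (C : R) :
  (forall k l, (k <= l)%N -> `|u k - u l| <= C / (k.+1)%:R) ->
  exists L, forall k, `|u k - L| <= C / (k.+1)%:R.
Proof.
move=> H.
have C0 : 0 <= C by have := H 0%N 0%N (leqnn _); rewrite subrr normr0 divr1.
have inv_ge0 (j : nat) : 0 <= C / (j.+1)%:R by rewrite divr_ge0.
pose a l := u l - C / (l.+1)%:R.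
pose E : set R := fun x => exists l, x = a l.
have ub0 k l : a l <= u k + C / (k.+1)%:R.
  rewrite /a; case: (leqP k l) => kl.
    move: (H k l kl) (inv_ge0 l) (inv_ge0 k); rewrite ler_norml.
    generalize (C / (k.+1)%:R) (C / (l.+1)%:R) => c1 c2 /andP[h1 h2] h3 h4; lra.
  move: (H l k (ltnW kl)) (inv_ge0 l) (inv_ge0 k); rewrite ler_norml.
  generalize (C / (k.+1)%:R) (C / (l.+1)%:R) => c1 c2 /andP[h1 h2] h3 h4; lra.
have ub k : ubound E (u k + C / (k.+1)%:R) by move=> x [l ->]; apply: ub0.
have nE : (E !=set0)%classic by exists (a 0%N), 0%N.
exists (sup E) => k.
have h1 : sup E <= u k + C / (k.+1)%:R by apply: ge_sup.
have h2 : a k <= sup E.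
  by apply: ub_le_sup; [exists (u 0%N + C / (0%N.+1)%:R); apply: ub | exists k].
rewrite ler_norml; move: h1 h2; rewrite /a.
generalize (C / (k.+1)%:R) => c1 h1 h2; apply/andP; split; lra.
Qed.

Lemma normc_Re (R : realType) (z : R[i]) : `|complex.Re z| <= ComplexField.Normc.normc z.
Proof.
case: z => a b /=; rewrite -sqrtr_sqr; apply: ler_wsqrtr.
by rewrite lerDl sqr_ge0.
Qed.

Lemma normc_Im (R : realType) (z : R[i]) : `|complex.Im z| <= ComplexField.Normc.normc z.
Proof.
case: z => a b /=; rewrite -sqrtr_sqr; apply: ler_wsqrtr.
by rewrite lerDr sqr_ge0.
Qed.

Lemma normc_ReIm (R : realType) (z : R[i]) :
  ComplexField.Normc.normc z <= `|complex.Re z| + `|complex.Im z|.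
Proof.
case: z => a b /=.
have -> : `|a| + `|b| = Num.sqrt ((`|a| + `|b|) ^+ 2).
  by rewrite sqrtr_sqr (ger0_norm (addr_ge0 (normr_ge0 a) (normr_ge0 b))).
apply: ler_wsqrtr.
rewrite sqrrD !real_normK ?num_real // -addrA lerD2l lerDr.
by rewrite mulrn_wge0 // mulr_ge0.
Qed.

Definition absP (R : realType) (F : numFieldType) (absF : F -> R) : Prop :=
  [/\ (forall x, 0 <= absF x), (forall x, absF x = 0 -> x = 0),
      (forall x y, absF (x * y) = absF x * absF y),
      (forall x y, absF (x + y) <= absF x + absF y) &
      (forall m : nat, absF m%:R = m%:R)] /\
  (forall (u : nat -> F) (C : R),
      (forall k l, (k <= l)%N -> absF (u k - u l) <= C / (k.+1)%:R) ->
      exists L, forall k, absF (u k - L) <= 2 * C / (k.+1)%:R).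

Lemma RorC_absP (R : realType) (F : numFieldType) (toC : F -> R[i]) (absF : F -> R) :
  RorC toC absF -> absP absF.
Proof.
case=> [|]; split.
- split; [exact: normr_ge0 | by move=> x /normr0_eq0 | exact: normrM
         | exact: ler_normD | by move=> m; rewrite normr_nat].
- move=> u C H; have [L HL] := real_complete H; exists L => k.
  have C0 : 0 <= C by have := H 0%N 0%N (leqnn _); rewrite subrr normr0 divr1.
  apply: (le_trans (HL k)); rewrite -mulrA ler_peMl // ?divr_ge0 //.
  by rewrite ler1n.
- split.
  + by case=> a b /=; apply: sqrtr_ge0.
  + exact: ComplexField.Normc.eq0_normc.
  + exact: ComplexField.Normc.normcM.
  + exact: complex.le_normcD.
  + by move=> m; rewrite -[m%:R]/(1 *+ m) complex.normcMn ComplexField.Normc.normc1.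
- move=> u C H.
  have HRe k l : (k <= l)%N -> `|complex.Re (u k) - complex.Re (u l)| <= C / (k.+1)%:R.
    by move=> kl; rewrite -raddfB; apply: le_trans (normc_Re _) (H k l kl).
  have HIm k l : (k <= l)%N -> `|complex.Im (u k) - complex.Im (u l)| <= C / (k.+1)%:R.
    by move=> kl; rewrite -raddfB; apply: le_trans (normc_Im _) (H k l kl).
  have [Lr HLr] := real_complete HRe.
  have [Li HLi] := real_complete HIm.
  exists (complex.Complex Lr Li) => k.
  apply: le_trans (normc_ReIm _) _.
  have -> : complex.Re (u k - (complex.Complex Lr Li)) = complex.Re (u k) - Lr by rewrite raddfB.
  have -> : complex.Im (u k - (complex.Complex Lr Li)) = complex.Im (u k) - Li by rewrite raddfB.
  rewrite -mulrA mulr2n mulrDl !mul1r; exact: lerD.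
Qed.
Section AbsLemmas.
Variables (R : realType) (F : numFieldType) (absF : F -> R).
Hypothesis hA : absP absF.

Lemma abs_ge0 x : 0 <= absF x. Proof. by case: hA => [[h _ _ _ _] _]. Qed.
Lemma abs_eq0 x : absF x = 0 -> x = 0. Proof. by case: hA => [[_ h _ _ _] _]; apply: h. Qed.
Lemma absM x y : absF (x * y) = absF x * absF y. Proof. by case: hA => [[_ _ h _ _] _]. Qed.
Lemma absD x y : absF (x + y) <= absF x + absF y. Proof. by case: hA => [[_ _ _ h _] _]. Qed.
Lemma abs_nat (m : nat) : absF m%:R = m%:R. Proof. by case: hA => [[_ _ _ _ h] _]. Qed.
Lemma abs0 : absF 0 = 0. Proof. by have := abs_nat 0. Qed.
Lemma abs1 : absF 1 = 1. Proof. by have := abs_nat 1. Qed.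
Lemma absN1 : absF (-1) = 1.
Proof.
have h : absF (-1) * absF (-1) = 1 by rewrite -absM mulrNN mulr1 abs1.
have h0 := abs_ge0 (-1).
have : (absF (-1) - 1) * (absF (-1) + 1) = 0 by rewrite mulrDr !mulrDl h; ring.
move/eqP; rewrite mulf_eq0 => /orP[/eqP|/eqP]; first by move/eqP; rewrite subr_eq0 => /eqP.
move=> e; have : absF (-1) = -1 by apply/eqP; rewrite -subr_eq0 opprK e.
by move=> e2; move: h0; rewrite e2 oppr_ge0 ler10.
Qed.
Lemma absN x : absF (- x) = absF x.
Proof. by rewrite -mulN1r absM absN1 mul1r. Qed.
Lemma absB x y : absF (x - y) = absF (y - x).
Proof. by rewrite -absN opprB. Qed.
Lemma absV x : absF x^-1 = (absF x)^-1.
Proof.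
have [->|x0] := eqVneq x 0; first by rewrite invr0 abs0 invr0.
have : absF x^-1 * absF x = 1 by rewrite -absM mulVf // abs1.
have ax : absF x != 0 by apply/eqP => /abs_eq0 /eqP; rewrite (negPf x0).
by move=> e; apply: (mulIf ax); rewrite e mulVf.
Qed.
Lemma abs_complete (u : nat -> F) (C : R) :
  (forall k l, (k <= l)%N -> absF (u k - u l) <= C / (k.+1)%:R) ->
  exists L, forall k, absF (u k - L) <= 2 * C / (k.+1)%:R.
Proof. by case: hA => _; apply. Qed.
Lemma abs_invn (k : nat) : absF ((k.+1)%:R^-1) = ((k.+1)%:R)^-1.
Proof. by rewrite absV abs_nat. Qed.
End AbsLemmas.

Lemma arch_zero (R : realType) (z c : R) : 0 <= z ->
  (forall k : nat, z <= c / (k.+1)%:R) -> z = 0.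
Proof.
move=> z0 H; case: (lerP z 0) => [zle|zp]; first by apply/eqP; rewrite eq_le zle z0.
exfalso.
have c0 : 0 <= c by have := H 0%N; rewrite divr1 => h; apply: le_trans h.
pose k := Num.Def.archi_bound (c / z).
have hk : c / z < k%:R by apply: archi_boundP; rewrite divr_ge0 // ltW.
have := H k; rewrite ler_pdivlMr ?ltr0Sn // => h.
have : c < k%:R * z by rewrite -ltr_pdivrMr.
have : k%:R * z <= z * (k.+1)%:R by rewrite mulrC; apply: ler_wpM2l; [exact: ltW | by rewrite ler_nat].
move=> a b; have := lt_le_trans b a; rewrite ltNge => /negP; apply; exact: h.
Qed.
Definition Emx {F : numFieldType} {p : nat} (x : 'I_p * 'I_p) : 'M[F]_p := delta_mx x.1 x.2.

Section NormLemmas.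
Variables (R : realType) (F : numFieldType) (absF : F -> R) (p : nat) (N : 'M[F]_p -> R).
Hypothesis hA : absP absF.
Hypothesis hN : mx_norm absF N.

Lemma N_ge0 X : 0 <= N X. Proof. by case: hN. Qed.
Lemma N_eq0 X : N X = 0 -> X = 0. Proof. by case: hN => _ h _ _; apply: h. Qed.
Lemma NZ a X : N (a *: X) = absF a * N X. Proof. by case: hN. Qed.
Lemma ND X Y : N (X + Y) <= N X + N Y. Proof. by case: hN. Qed.
Lemma N0 : N 0 = 0. Proof. by rewrite -(scale0r 0) NZ (abs0 hA) mul0r. Qed.
Lemma NN X : N (- X) = N X. Proof. by rewrite -scaleN1r NZ (absN1 hA) mul1r. Qed.
Lemma NB X Y : N (X - Y) = N (Y - X). Proof. by rewrite -NN opprB. Qed.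
Lemma N_sum (I : Type) (r : seq I) (G : I -> 'M[F]_p) :
  N (\sum_(i <- r) G i) <= \sum_(i <- r) N (G i).
Proof.
elim: r => [|x r IH]; first by rewrite !big_nil N0.
rewrite !big_cons; apply: le_trans (ND _ _) _; exact: lerD.
Qed.


Lemma N_entries X :
  N X <= \sum_(x : 'I_p * 'I_p) absF (X x.1 x.2) * N (Emx x).
Proof.
have e : X = \sum_(x : 'I_p * 'I_p) X x.1 x.2 *: Emx x.
  by rewrite {1}[X]matrix_sum_delta pair_bigA.
rewrite {1}e.
apply: le_trans (N_sum _ _) _; apply: ler_sum => x _.
by rewrite NZ.
Qed.
End NormLemmas.
Section Lower.
Variables (R : realType) (F : numFieldType) (absF : F -> R) (p : nat) (N : 'M[F]_p -> R).
Hypothesis hA : absP absF.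
Hypothesis hN : mx_norm absF N.

Definition Wsp (s : seq ('I_p * 'I_p)) (X : 'M[F]_p) := forall x, x \notin s -> X x.1 x.2 = 0.

Lemma Emx_entry (x y : 'I_p * 'I_p) : (Emx x : 'M[F]_p) y.1 y.2 = (y == x)%:R.
Proof. by case: x y => [a b] [c d]; rewrite mxE /= xpair_eqE. Qed.

Lemma dist_pos s K x0 : 0 <= K ->
  (forall X, Wsp s X -> forall x, absF (X x.1 x.2) <= K * N X) -> x0 \notin s ->
  exists d, 0 < d /\ forall Y, Wsp s Y -> d <= N (Emx x0 + Y).
Proof.
move=> K0 HK x0s.
case: (pselect (exists d, 0 < d /\ forall Y, Wsp s Y -> d <= N (Emx x0 + Y))) => // Hneg.
exfalso.
have h k : exists Y, Wsp s Y /\ N (Emx x0 + Y) < (k.+1)%:R^-1.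
  case: (pselect (exists Y, Wsp s Y /\ N (Emx x0 + Y) < (k.+1)%:R^-1)) => // hno.
  exfalso; apply: Hneg; exists (k.+1)%:R^-1; split; first by rewrite invr_gt0 ltr0Sn.
  move=> Y WY; rewrite leNgt; apply/negP => lt; apply: hno; by exists Y.
case: (choice h) => Yf HY.
have inv_le k l : (k <= l)%N -> (l.+1)%:R^-1 <= (k.+1)%:R^-1 :> R.
  by move=> kl; rewrite lef_pV2 ?posrE ?ltr0Sn // ler_nat ltnS.
have cau x k l : (k <= l)%N ->
    absF (Yf k x.1 x.2 - Yf l x.1 x.2) <= (2 * K) / (k.+1)%:R.
  move=> kl.
  have W2 : Wsp s (Yf k - Yf l).
    by move=> y ys; rewrite !mxE (proj1 (HY k) y ys) (proj1 (HY l) y ys) subrr.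
  have := HK _ W2 x; rewrite !mxE => h1; apply: le_trans h1 _.
  have e : Yf k - Yf l = (Emx x0 + Yf k) - (Emx x0 + Yf l) by rewrite opprD addrACA subrr add0r.
  rewrite e; apply: le_trans (ler_wpM2l K0 (ND hN _ _)) _.
  rewrite (NN hA hN).
  have -> : 2 * K / (k.+1)%:R = K * ((k.+1)%:R^-1 + (k.+1)%:R^-1) by ring.
  apply: ler_wpM2l => //.
  apply: lerD; apply: ltW; first exact: (proj2 (HY k)).
  exact: lt_le_trans (proj2 (HY l)) (inv_le _ _ kl).
have hL x : exists L, forall k, absF (Yf k x.1 x.2 - L) <= 2 * (2 * K) / (k.+1)%:R.
  exact: (abs_complete hA (cau x)).
case: (choice hL) => Lf HL.
pose Ys : 'M[F]_p := \matrix_(i, j) (if (i, j) \in s then Lf (i, j) else 0).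
have WYs : Wsp s Ys by case=> i j ijs; rewrite mxE (negPf ijs).
pose S := \sum_(x : 'I_p * 'I_p) N (Emx x).
have S0 : 0 <= S by apply: sumr_ge0 => x _; exact: N_ge0 hN _.
have bnd k : N (Emx x0 + Ys) <= (1 + 4 * K * S) / (k.+1)%:R.
  have e : Emx x0 + Ys = (Emx x0 + Yf k) + (Ys - Yf k) by rewrite addrA addrAC addrK.
  rewrite e; apply: le_trans (ND hN _ _) _.
  have h1 := proj2 (HY k).
  have h2 : N (Ys - Yf k) <= (4 * K / (k.+1)%:R) * S.
    apply: le_trans (N_entries hA hN _) _; rewrite /S mulr_sumr; apply: ler_sum => x _.
    apply: ler_wpM2r; first exact: N_ge0 hN _.
    case: x => a b; rewrite !mxE /=; case: ifP => xs.
      rewrite (absB hA); apply: le_trans (HL (a, b) k) _.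
      by rewrite mulrA -natrM.
    have -> : Yf k a b = 0 by apply: (proj1 (HY k) (a, b)); rewrite xs.
    rewrite subrr (abs0 hA); apply: divr_ge0; last by [].
    by apply: mulr_ge0.
  have -> : (1 + 4 * K * S) / (k.+1)%:R = (k.+1)%:R^-1 + (4 * K / (k.+1)%:R) * S by ring.
  exact: lerD (ltW h1) h2.
have Z := arch_zero (N_ge0 hN _) bnd.
have Z2 := N_eq0 hN Z.
have e1 : (Emx x0 + Ys) x0.1 x0.2 = 1 + 0.
  rewrite mxE Emx_entry eqxx; congr (_ + _); rewrite mxE -surjective_pairing.
  by rewrite (negPf x0s).
move: e1; rewrite Z2 mxE addr0 => /eqP; by rewrite eq_sym oner_eq0.
Qed.
End Lower.
Section Lower2.
Variables (R : realType) (F : numFieldType) (absF : F -> R) (p : nat) (N : 'M[F]_p -> R).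
Hypothesis hA : absP absF.
Hypothesis hN : mx_norm absF N.

Lemma lower_step s K x0 : 0 <= K ->
  (forall X, Wsp s X -> forall x, absF (X x.1 x.2) <= K * N X) -> x0 \notin s ->
  exists K', 0 <= K' /\ forall X, Wsp (x0 :: s) X -> forall x, absF (X x.1 x.2) <= K' * N X.
Proof.
move=> K0 HK x0s.
have [d [d0 Hd]] := dist_pos hA hN K0 HK x0s.
pose ne := N (Emx x0 : 'M[F]_p).
have ne0 : 0 <= ne by exact: N_ge0 hN _.
exists (K * (1 + ne / d) + d^-1); split.
  by apply: addr_ge0; [apply: mulr_ge0 => //; apply: addr_ge0 => //; apply: divr_ge0 => //; apply: ltW | rewrite invr_ge0 ltW].
move=> X WX x.
have ent (M : 'M[F]_p) c (y : 'I_p * 'I_p) :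
    (M - c *: (Emx x0 : 'M[F]_p)) y.1 y.2 = M y.1 y.2 - c * (y == x0)%:R.
  by rewrite !mxE -Emx_entry /Emx !mxE.
pose a := X x0.1 x0.2.
pose Y := X - a *: Emx x0.
have WY : Wsp s Y.
  move=> y ys; rewrite /Y ent; have [->|yx] := eqVneq y x0; first by rewrite mulr1 subrr.
  by rewrite mulr0 subr0; apply: WX; rewrite in_cons negb_or yx ys.
have haa : absF a <= N X / d.
  have [a0|an0] := eqVneq a 0; first by rewrite a0 (abs0 hA); apply: divr_ge0; [exact: N_ge0 hN _ | exact: ltW].
  have eX : X = a *: (Emx x0 + a^-1 *: Y).
    by rewrite scalerDr scalerA mulfV // scale1r /Y addrC subrK.
  have WY' : Wsp s (a^-1 *: Y) by move=> y ys; rewrite mxE WY // mulr0.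
  have hM := Hd _ WY'.
  have -> : N X = absF a * N (Emx x0 + a^-1 *: Y) by rewrite {1}eX (NZ hN).
  rewrite ler_pdivlMr //; apply: ler_wpM2l => //; exact: (abs_ge0 hA).
have hY : N Y <= N X + absF a * ne.
  by apply: le_trans (ND hN _ _) _; rewrite (NN hA hN) (NZ hN).
have hx : absF (X x.1 x.2) <= absF (Y x.1 x.2) + absF a.
  have -> : X x.1 x.2 = Y x.1 x.2 + a * (x == x0)%:R by rewrite /Y ent subrK.
  apply: le_trans (absD hA _ _) _; apply: lerD => //.
  rewrite (absM hA) (abs_nat hA); case: (x == x0); first by rewrite mulr1.
  by rewrite mulr0; exact: abs_ge0 hA _.
have hyx := HK Y WY x.
have e : (K * (1 + ne / d) + d^-1) * N X = K * (N X + N X / d * ne) + N X / d by ring.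
rewrite e; apply: le_trans hx _; apply: lerD => //.
apply: le_trans hyx _; apply: ler_wpM2l => //; apply: le_trans hY _.
by apply: lerD => //; apply: ler_wpM2r.
Qed.

Lemma lower_bound : exists K, 0 <= K /\ forall (X : 'M[F]_p) (x : 'I_p * 'I_p), absF (X x.1 x.2) <= K * N X.
Proof.
suff [K [K0 HK]] : exists K, 0 <= K /\ forall X : 'M[F]_p, Wsp (enum {: 'I_p * 'I_p}) X ->
    forall x, absF (X x.1 x.2) <= K * N X.
  by exists K; split => // X x; apply: HK => y; rewrite mem_enum.
elim: (enum _) => [|x0 s [K [K0 HK]]].
  exists 0; split => // X WX x.
  have -> : X = 0 by apply/matrixP => i j; rewrite mxE; apply: (WX (i, j)).
  by rewrite mxE (abs0 hA) mul0r.
have [x0s|x0s] := boolP (x0 \in s).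
  exists K; split => // X WX; apply: HK => y ys; apply: WX.
  by rewrite in_cons negb_or ys andbT; apply: contraNneq ys => ->.
exact: lower_step K0 HK x0s.
Qed.
End Lower2.
Section Cont.
Variables (R : realType) (F : numFieldType) (absF : F -> R).
Hypothesis hA : absP absF.
Variables (m : nat) (v0 : 'I_m -> F).

Definition contf (g : ('I_m -> F) -> F) := forall e : R, 0 < e -> exists eta : R, 0 < eta /\
  forall v, (forall i, absF (v i - v0 i) < eta) -> absF (g v - g v0) < e.

Lemma cont_const c : contf (fun _ => c).
Proof. by move=> e e0; exists 1; split => // v _; rewrite subrr (abs0 hA). Qed.

Lemma cont_proj i : contf (fun v => v i).
Proof. by move=> e e0; exists e; split => // v H; apply: H. Qed.

Lemma cont_add g h : contf g -> contf h -> contf (fun v => g v + h v).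
Proof.
move=> cg ch e e0.
have e20 : 0 < e / 2 by rewrite divr_gt0.
have [e1 [e10 H1]] := cg _ e20; have [e2 [e20' H2]] := ch _ e20.
exists (Num.min e1 e2); split; first by rewrite lt_min e10 e20'.
move=> v Hv.
have h1 : absF (g v - g v0) < e / 2.
  by apply: H1 => i; apply: lt_le_trans (Hv i) _; rewrite ge_min le_refl.
have h2 : absF (h v - h v0) < e / 2.
  by apply: H2 => i; apply: lt_le_trans (Hv i) _; rewrite ge_min le_refl orbT.
have -> : g v + h v - (g v0 + h v0) = (g v - g v0) + (h v - h v0) by ring.
apply: le_lt_trans (absD hA _ _) _; move: h1 h2; generalize (absF (g v - g v0)) (absF (h v - h v0)) => x y.
lra.
Qed.

Lemma cont_mul g h : contf g -> contf h -> contf (fun v => g v * h v).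
Proof.
move=> cg ch e e0.
pose A := absF (g v0); pose B := absF (h v0).
have A0 : 0 <= A by exact: abs_ge0 hA _.
have B0 : 0 <= B by exact: abs_ge0 hA _.
pose d := Num.min 1 (e / (2 * (A + B + 1))).
have d0 : 0 < d by rewrite lt_min ltr01 /= divr_gt0 // mulr_gt0 // ltr_wpDl // ?addr_ge0.
have d1 : d <= 1 by rewrite ge_min le_refl.
have d2 : d * (A + B + 1) <= e / 2.
  have dd : d <= e / (2 * (A + B + 1)) by rewrite ge_min le_refl orbT.
  have pos : 0 < A + B + 1 by rewrite ltr_wpDl // ?addr_ge0.
  by rewrite -ler_pdivlMr //; move: dd; rewrite invfM mulrA.
have [e1 [e10 H1]] := cg _ d0; have [e2 [e20 H2]] := ch _ d0.
exists (Num.min e1 e2); split; first by rewrite lt_min e10 e20.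
move=> v Hv.
have h1 : absF (g v - g v0) < d.
  by apply: H1 => i; apply: lt_le_trans (Hv i) _; rewrite ge_min le_refl.
have h2 : absF (h v - h v0) < d.
  by apply: H2 => i; apply: lt_le_trans (Hv i) _; rewrite ge_min le_refl orbT.
have -> : g v * h v - g v0 * h v0 =
   (g v - g v0) * (h v - h v0) + (g v0 * (h v - h v0) + (g v - g v0) * h v0) by ring.
apply: le_lt_trans (absD hA _ _) _.
apply: le_lt_trans (lerD (le_refl _) (absD hA _ _)) _.
rewrite !(absM hA) -/A -/B.
have x0 := abs_ge0 hA (g v - g v0); have y0 := abs_ge0 hA (h v - h v0).
move: h1 h2 x0 y0 d2 d1 d0.
generalize (absF (g v - g v0)) (absF (h v - h v0)) => x y.
move=> h1 h2 x0 y0 d2 d1 d0'.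
nra.
Qed.

Lemma cont_sum (I : Type) (s : seq I) (G : I -> ('I_m -> F) -> F) :
  (forall i, contf (G i)) -> contf (fun v => \sum_(i <- s) G i v).
Proof.
move=> H; elim: s => [|x s IH].
  by under eq_fun do rewrite big_nil; apply: cont_const.
by under eq_fun do rewrite big_cons; apply: cont_add.
Qed.

Lemma cont_prod (I : Type) (s : seq I) (G : I -> ('I_m -> F) -> F) :
  (forall i, contf (G i)) -> contf (fun v => \prod_(i <- s) G i v).
Proof.
move=> H; elim: s => [|x s IH].
  by under eq_fun do rewrite big_nil; apply: cont_const.
by under eq_fun do rewrite big_cons; apply: cont_mul.
Qed.

Lemma cont_exp g k : contf g -> contf (fun v => g v ^+ k).
Proof.
move=> cg; elim: k => [|k IH].
  by under eq_fun do rewrite expr0; apply: cont_const.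
by under eq_fun do rewrite exprS; apply: cont_mul.
Qed.

Lemma cont_meval (q : {mpoly F[m]}) : contf (fun v => q.@[v]).
Proof.
under eq_fun do rewrite mevalE.
apply: cont_sum => mm; apply: cont_mul; first exact: cont_const.
apply: cont_prod => i; apply: cont_exp; exact: cont_proj.
Qed.
End Cont.
Section Open.
Variables (R : realType) (F : numFieldType) (absF : F -> R) (p : nat) (N : 'M[F]_p.+1 -> R).
Hypothesis hA : absP absF.
Hypothesis hN : mx_norm absF N.

Definition vecm (X : 'M[F]_p.+1) : 'I_(p.+1 * p.+1) -> F := fun k => mxvec X 0 k.
Definition Gm : 'M[{mpoly F[p.+1 * p.+1]}]_p.+1 := \matrix_(i, j) 'X_(mxvec_index i j).

Lemma Gam_eval (X : 'M[F]_p.+1) : Gam X = (Gam Gm).@[vecm X].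
Proof.
rewrite (map_Gam (meval (vecm X))); last by rewrite pnatr_eq0.
by congr Gam; apply/matrixP => i j; rewrite !mxE; rewrite [RHS](mevalXU (vecm X) (mxvec_index i j)) /vecm mxvecE.
Qed.

Lemma Gam_open (X0 : 'M[F]_p.+1) : Gam X0 != 0 ->
  exists r, 0 < r /\ forall X, N (X - X0) < r -> Gam X != 0.
Proof.
move=> g0.
have e0 : 0 < absF (Gam X0).
  rewrite lt_def abs_ge0 // andbT; apply/eqP => /(abs_eq0 hA) /eqP; exact/negP.
have [eta [eta0 Heta]] := cont_meval hA (vecm X0) (Gam Gm) e0.
have [K [K0 HK]] := lower_bound hA hN.
exists (eta / (K + 1)); split; first by rewrite divr_gt0 // ltr_wpDl.
move=> X HX.
have H : forall k, absF (vecm X k - vecm X0 k) < eta.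
  move=> k; case/mxvec_indexP: k => i j.
  rewrite /vecm !mxvecE.
  have -> : X i j - X0 i j = (X - X0) (i, j).1 (i, j).2 by rewrite !mxE.
  apply: le_lt_trans (HK _ _) _.
  have n0 := N_ge0 hN (X - X0).
  apply: (@le_lt_trans _ _ ((K + 1) * N (X - X0))); first by rewrite ler_wpM2r // lerDl.
  by rewrite mulrC -ltr_pdivlMr ?ltr_wpDl.
have := Heta _ H; rewrite -!Gam_eval.
apply: contraTN => /eqP ->; rewrite sub0r (absN hA) lt_irreflexive //.
Qed.
End Open.
Section Dense.
Variables (R : realType) (F : numFieldType) (absF : F -> R).
Hypothesis hA : absP absF.
Variable (p : nat).

Lemma Gam_line (M : 'M[F]_p.+1) : exists q : {poly F}, q != 0 /\
  forall t, q.[t] = Gam (M + t *: (Dmx F p - M)).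
Proof.
pose Xp : 'M[{poly F}]_p.+1 := map_mx polyC M + 'X *: map_mx polyC (Dmx F p - M).
have ev t : Gam (M + t *: (Dmx F p - M)) = (Gam Xp).[t].
  rewrite -[(Gam Xp).[t]]/(horner_eval t (Gam Xp)) (map_Gam (horner_eval t)); last by rewrite pnatr_eq0.
  congr Gam; apply/matrixP => i j; rewrite !mxE -[RHS]/((_ : {poly F}).[t]).
  by rewrite !hornerE.
exists (Gam Xp); split => [|t]; last by rewrite ev.
apply/eqP => q0; have := Gam_Dmx F p; rewrite -[Dmx F p](addrNK M) addrC.
by rewrite -[X in _ + X]scale1r ev q0 horner0 eqxx.
Qed.

Lemma dense_line (M : 'M[F]_p.+1) (c d : R) : 0 <= c -> 0 < d ->
  exists t : F, absF t * c < d /\ Gam (M + t *: (Dmx F p - M)) != 0.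
Proof.
move=> c0 d0.
have [q [q0 Hq]] := Gam_line M.
pose m0 := Num.Def.archi_bound (c / d).
have hm0 : c / d < m0%:R by apply: archi_boundP; rewrite divr_ge0 // ltW.
pose tt (j : nat) : F := ((m0 + j).+1%:R)^-1.
pose rs := [seq tt j | j <- iota 0 (size q)].
have : ~~ all (root q) rs.
  have un : uniq rs.
    rewrite map_inj_uniq ?iota_uniq // => a b /invr_inj /eqP.
    by rewrite eqr_nat eqSS eqn_add2l => /eqP.
  apply/negP => hall; have := max_poly_roots q0 hall un.
  by rewrite size_map size_iota ltnn.
case/allPn => x /mapP [j _ ->] nr.
exists (tt j); split; last by rewrite -Hq.
rewrite (abs_invn hA) mulrC ltr_pdivrMr ?ltr0Sn //.
rewrite ltr_pdivrMr // in hm0; apply: lt_le_trans hm0 _.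
rewrite mulrC; apply: ler_wpM2l; first exact: ltW.
by rewrite ler_nat ltnW // ltnS leq_addr.
Qed.
End Dense.
Lemma prod_split (F : fieldType) p (I : eqType) (r : seq I) (i0 : I)
  (c : I -> 'M[F]_p.+1) : (forall i, c i \in unitmx) -> uniq r ->
  exists L Rm, [/\ L \in unitmx, Rm \in unitmx &
    forall Y, \prod_(i <- r) (if i == i0 then Y else c i) =
              L * (if i0 \in r then Y else 1) * Rm].
Proof.
move=> cu; elim: r => [|x r IH].
  by move=> _; exists 1, 1; split; rewrite ?unitmx1 // => Y; rewrite big_nil !mul1r.
rewrite cons_uniq => /andP[xr ur]; have [L [Rm [Lu Ru HY]]] := IH ur.
have [xi|xi] := eqVneq x i0.
  subst x; exists 1, (L * Rm); split; first exact: unitmx1.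
    by rewrite -mulmxE unitmx_mul Lu Ru.
  by move=> Y; rewrite big_cons eqxx HY (negPf xr) in_cons eqxx /= mulr1 mul1r.
exists (c x * L), Rm; split => //; first by rewrite -mulmxE unitmx_mul cu Lu.
move=> Y; rewrite big_cons (negPf xi) HY in_cons (eq_sym i0) (negPf xi) /=.
by rewrite !mulrA.
Qed.
Lemma RorC_simple (R : realType) (F : numFieldType) (toC : F -> R[i]) (absF : F -> R) :
  RorC toC absF -> forall m (X : 'M[F]_m.+1),
  separable_poly (char_poly X) -> simple_spectrum toC X.
Proof.
case=> m X sep z.
  exact: (sep_simple (real_complex R) sep z).
exact: (sep_simple (@idfun R[i]) sep z).
Qed.

Theorem proposition3 (R : realType) (F : numFieldType) (toC : F -> R[i])
  (absF : F -> R) (HF : @RorC R F toC absF)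
  (n k : nat) (N : 'M[F]_n.+1 -> R) (HN : mx_norm absF N)
  (hk : (0 < k)%N)
  (f : 'I_k -> 'M[F]_n.+1 -> 'M[F]_n.+1)
  (hf : forall i, GL_map (f i))
  (hopen : exists i, open_GL_map N (f i))
  (A : 'I_k -> 'M[F]_n.+1) (eps : R) (heps : 0 < eps) :
  exists Aeps : 'I_k -> 'M[F]_n.+1,
    (forall i, [/\ Aeps i \in unitmx, simple_spectrum toC (Aeps i)
                 & N (A i - Aeps i) < eps]) /\
    simple_spectrum toC (\prod_(i < k) f i (Aeps i)).
Proof.
have hA := RorC_absP HF.
have hsimp (X : 'M[F]_n.+1) : Gam X != 0 -> X \in unitmx /\ simple_spectrum toC X.
  move=> g; have [u sep] := Gam_neq0 g; split => //; exact: (RorC_simple HF sep).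
have [i0 hi0] := hopen.
pose D := Dmx F n.
have hB i : exists t : F, absF t * N (D - A i) < eps /\ Gam (A i + t *: (D - A i)) != 0.
  have := @dense_line R F absF hA n (A i) _ _ (N_ge0 HN (D - A i)) heps; exact.
case: (choice hB) => tf Htf.
pose B i := A i + tf i *: (D - A i).
have nB i : N (A i - B i) < eps.
  by rewrite /B opprD addrA subrr add0r (NN hA HN) (NZ HN); exact: (Htf i).1.
pose U := fun X => Gam X != 0 /\ N (A i0 - X) < eps.
have UO : GL_open N U.
  split; first by move=> X [g _]; exact: (Gam_neq0 g).1.
  move=> X [g hX]; have [r1 [r10 Hr1]] := Gam_open hA HN g.
  exists (Num.min r1 (eps - N (A i0 - X))); split.
    by rewrite lt_min r10 subr_gt0 hX.
  move=> Y Yu hY; split.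
    by apply: Hr1; apply: lt_le_trans hY _; rewrite ge_min le_refl.
  have h2 : N (Y - X) < eps - N (A i0 - X).
    by apply: lt_le_trans hY _; rewrite ge_min le_refl orbT.
  have e : A i0 - Y = (A i0 - X) + (X - Y) by rewrite addrA addrNK.
  rewrite e; apply: le_lt_trans (ND HN _ _) _; rewrite (NB hA HN X Y).
  by rewrite -ltrBrDl.
have VO := hi0 U UO.
have BU : U (B i0) := conj (Htf i0).2 (nB i0).
pose Y0 := f i0 (B i0).
have [_ hV] := VO.
have [r [r0 Hr]] := hV Y0 (ex_intro _ (B i0) (conj BU erefl)).
pose c i := f i (B i).
have cu i : c i \in unitmx by apply: hf; exact: (Gam_neq0 (Htf i).2).1.
have [L [Rm [Lu Ru HLR]]] := prod_split i0 cu (index_enum_uniq 'I_k).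
pose M := L * Y0 * Rm.
pose Dir := invmx L * (D - M) * invmx Rm.
have [t [ht hg]] := dense_line hA M (N_ge0 HN Dir) r0.
pose Y := Y0 + t *: Dir.
have eLYR : L * Y * Rm = M + t *: (D - M).
  rewrite /Y mulrDr mulrDl -/M; congr (_ + _).
  rewrite -scalerAr -scalerAl /Dir; congr (_ *: _).
  rewrite -!mulmxE !mulmxA mulmxV // mul1mx -mulmxA mulVmx // mulmx1 //.
have Yu : Y \in unitmx.
  have := (Gam_neq0 hg).1; rewrite -eLYR -!mulmxE !unitmx_mul.
  by case/andP => /andP[].
have [X [[gX hX] fX]] : exists X, U X /\ f i0 X = Y.
  apply: Hr => //; rewrite /Y addrC addKr (NZ HN); exact: ht.
exists (fun i => if i == i0 then X else B i); split.
  move=> i; case: (eqVneq i i0) => [->|ne].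
    by have [u s] := hsimp _ gX; split.
  by have [u s] := hsimp _ (Htf i).2; split => //; exact: nB.
have -> : \prod_(i < k) f i (if i == i0 then X else B i) =
    \prod_(i <- index_enum 'I_k) (if i == i0 then Y else c i).
  apply: eq_bigr => i _; case: (eqVneq i i0) => [->|ne]; first by rewrite fX.
  by [].
rewrite HLR mem_index_enum eLYR; exact: (hsimp _ hg).2.
Qed.
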